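(* Let $2\le p<\infty$. There exists a constant $c=c(p)>0$ such that for every $\xi,\eta\in\mathbb{R}^n\setminus\{0\}$, $$\langle H_{p-1}(\xi)-H_{p-1}(\eta),\xi-\eta\rangle \;\ge\; c(p)\left[\frac{(|\xi|-1)_+^{p}}{|\xi|^2}+\frac{(|\eta|-1)_+^{p}}{|\eta|^2}\right]|\xi-\eta|^2 .$$
   Context: For $\gamma>0$, $H_\gamma:\mathbb{R}^n\to\mathbb{R}^n$ is defined by $H_\gamma(\xi)=(|\xi|-1)_+^{\gamma}\,\frac{\xi}{|\xi|}$ for $\xi\neq 0$ and $H_\gamma(0)=0$, where $(s)_+=\max\{s,0\}$ and $\langle\cdot,\cdot\rangle$ is the Euclidean inner product. *)

(* Defs.v *)
From HB Require Import structures.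
From mathcomp Require Import all_boot all_order all_algebra.
From mathcomp Require Import all_classical all_reals all_analysis.
Set Implicit Arguments. Unset Strict Implicit. Unset Printing Implicit Defensive.
Import Order.TTheory GRing.Theory Num.Theory.
Local Open Scope ring_scope.

Definition dotv (R : realType) (n : nat) (u v : 'rV[R]_n) : R :=
  \sum_(i < n) u 0 i * v 0 i.

Definition enorm (R : realType) (n : nat) (u : 'rV[R]_n) : R :=
  Num.sqrt (dotv u u).

Definition pos_part (R : realType) (s : R) : R := Num.max s 0.

Definition Hgam (R : realType) (gamma : R) (n : nat) (xi : 'rV[R]_n) : 'rV[R]_n :=
  if xi == 0 then 0
  else (powR (pos_part (enorm xi - 1)) gamma / enorm xi) *: xi.

(* Main.v *)
Require Import Defs.
From HB Require Import structures.
From mathcomp Require Import all_boot all_order all_algebra.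
From mathcomp Require Import all_classical all_reals all_analysis.
From mathcomp Require Import ring lra.
Import Order.TTheory GRing.Theory Num.Theory.
Local Open Scope ring_scope.

Section Aux.
Variable R : realType.

Lemma dotvC n (u v : 'rV[R]_n) : dotv u v = dotv v u.
Proof. by apply: eq_bigr => i _; rewrite mulrC. Qed.

Lemma dotvBl n (u v w : 'rV[R]_n) : dotv (u - v) w = dotv u w - dotv v w.
Proof. by rewrite /dotv -sumrB; apply: eq_bigr => i _; rewrite !mxE mulrBl. Qed.

Lemma dotvZl n a (u w : 'rV[R]_n) : dotv (a *: u) w = a * dotv u w.
Proof. by rewrite /dotv mulr_sumr; apply: eq_bigr => i _; rewrite !mxE mulrA. Qed.

Lemma dotvBr n (u v w : 'rV[R]_n) : dotv w (u - v) = dotv w u - dotv w v.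
Proof. by rewrite dotvC dotvBl !(dotvC _ w). Qed.

Lemma dotv_ge0 n (u : 'rV[R]_n) : 0 <= dotv u u.
Proof. by apply: sumr_ge0 => i _; rewrite -expr2 sqr_ge0. Qed.

Lemma enorm_sq n (u : 'rV[R]_n) : enorm u ^+ 2 = dotv u u.
Proof. by rewrite /enorm sqr_sqrtr // dotv_ge0. Qed.

Lemma enorm_ge0 n (u : 'rV[R]_n) : 0 <= enorm u.
Proof. by rewrite /enorm sqrtr_ge0. Qed.

Definition F (g a : R) := powR (pos_part (a - 1)) g / a.

Lemma F_ge0 g a : 0 <= a -> 0 <= F g a.
Proof. by move=> ha; rewrite /F divr_ge0 // powR_ge0. Qed.

Lemma F_mono g a b : 1 <= g -> 0 <= b -> b <= a -> F g b <= F g a.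
Proof.
move=> hg hb hba.
have ha : 0 <= a by apply: le_trans hba.
rewrite /F /pos_part.
case: (lerP (b - 1) 0) => hb1.
  rewrite powR0 ?mul0r; first by rewrite divr_ge0 // powR_ge0.
  by rewrite gt_eqF // (lt_le_trans ltr01 hg).
have ha1 : 0 <= a - 1 by lra.
case: (lerP (a - 1) 0) => ha1'; first lra.
have hg0 : 0 < g by lra.
rewrite -(mulr_powRB1 (ltW hb1) hg0) -(mulr_powRB1 ha1 hg0).
have hP : powR (b - 1) (g - 1) <= powR (a - 1) (g - 1).
  by apply: ge0_ler_powR => //; rewrite ?subr_ge0 ?nnegrE //; lra.
have hb0 : 0 < b by lra.
have ha0 : 0 < a by lra.
have hq : (b - 1) / b <= (a - 1) / a.
  rewrite -subr_ge0.
  have -> : (a - 1) / a - (b - 1) / b = (a - b) / (a * b).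
    by field; apply/andP; split; rewrite gt_eqF.
  by rewrite divr_ge0 ?mulr_ge0 // subr_ge0.
rewrite [X in X <= _]mulrAC [X in _ <= X]mulrAC [X in X <= _]mulrC [X in _ <= X]mulrC.
apply: ler_pM => //; first exact: powR_ge0.
by rewrite divr_ge0 //; lra.
Qed.

Lemma key_bound p a : 2 <= p -> 0 <= a ->
  powR (pos_part (a - 1)) p / a ^+ 2 <= F (p - 1) a.
Proof.
move=> hp ha.
set u := pos_part (a - 1).
have hu0 : 0 <= u by rewrite /u /pos_part le_max lexx orbT.
have hua : u <= a by rewrite /u /pos_part ge_max ha andbT; lra.
have hp0 : 0 < p by lra.
rewrite /F -/u -(mulr_powRB1 hu0 hp0).
have [->|an0] := eqVneq a 0; first by rewrite expr0n /= invr0 !mulr0.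
have ha0 : 0 < a by rewrite lt_neqAle eq_sym an0 ha.
have -> : u * powR u (p - 1) / a ^+ 2 = (u / a) * (powR u (p - 1) / a) by field.
rewrite -[X in _ <= X]mul1r; apply: ler_wpM2r.
  by rewrite divr_ge0 // powR_ge0.
by rewrite ler_pdivrMr // mul1r.
Qed.

End Aux.
Arguments dotvC {R n}. Arguments dotvBl {R n}. Arguments dotvZl {R n}. Arguments dotvBr {R n}.
Arguments dotv_ge0 {R n}. Arguments enorm_sq {R n}. Arguments enorm_ge0 {R n}.
Arguments F {R}.

Theorem lemma2p4 (R : realType) (p : R) :
  2 <= p ->
  exists c : R, 0 < c /\
    forall (n : nat) (xi eta : 'rV[R]_n), xi != 0 -> eta != 0 ->
      c * (powR (pos_part (enorm xi - 1)) p / (enorm xi) ^+ 2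
           + powR (pos_part (enorm eta - 1)) p / (enorm eta) ^+ 2)
        * (enorm (xi - eta)) ^+ 2
      <= dotv (Hgam (p - 1) xi - Hgam (p - 1) eta) (xi - eta).
Proof.
move=> hp; exists (1/2); split; first by rewrite divr_gt0.
move=> n xi eta hx hy.
rewrite /Hgam (negbTE hx) (negbTE hy).
have k1 := @key_bound R _ _ hp (enorm_ge0 xi).
have k2 := @key_bound R _ _ hp (enorm_ge0 eta).
have hmono : 0 <= (F (p - 1) (enorm xi) - F (p - 1) (enorm eta))
                  * (enorm xi ^+ 2 - enorm eta ^+ 2).
  have ha := enorm_ge0 xi; have hb := enorm_ge0 eta.
  have hg : 1 <= p - 1 by lra.
  have -> : enorm xi ^+ 2 - enorm eta ^+ 2
          = (enorm xi - enorm eta) * (enorm xi + enorm eta) by ring.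
  case: (lerP (enorm eta) (enorm xi)) => h.
    have := @F_mono R _ _ _ hg hb h => hF.
    by rewrite !mulr_ge0 // ?subr_ge0 // addr_ge0.
  have := @F_mono R _ _ _ hg ha (ltW h) => hF.
  apply: mulr_le0; first by rewrite subr_le0.
  by rewrite mulr_le0_ge0 ?addr_ge0 // subr_le0 ltW.
have hD := dotv_ge0 (xi - eta).
move: k1 k2 hmono hD.
rewrite !enorm_sq.
rewrite /F.
set s := powR _ (p - 1) / enorm xi.
set t := powR _ (p - 1) / enorm eta.
rewrite (dotvBl (s *: xi)) !dotvZl !dotvBr !dotvBl (dotvC eta xi).
set Xa := _ / dotv xi xi; set Xb := _ / dotv eta eta.
move=> k1 k2 hm hD.
have hprod : 0 <= (s + t - Xa - Xb) * (dotv xi xi - dotv xi eta - (dotv xi eta - dotv eta eta)).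
  by rewrite mulr_ge0 //; lra.
nra.
Qed.
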